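(* Let $r^*,\tilde r,\tau_0\in\mathbb R$ with $r^*<\tilde r$, and let $\psi$ be a solution of $\Box_g\psi=0$ on the Rindler spacetime whose data on $\Sigma^{r^*,\tilde r}_{\tau_0}$ (or on $\Sigma_{\tau_0}$) are compactly supported with respect to the regular coordinates $(U,V)$, and need not vanish at $\mathcal{RH}^+$. Then there is a constant $B$ such that for every $\tau_1\ge\tau_0$: \[ E^{\partial_\tau}[\Sigma^{r^*,\tilde r}_{\tau_1}]\le B\,E^{\partial_\tau}[\Sigma^{r^*,\tilde r}_{\tau_0}],\qquad E^{\partial_\tau}[\Sigma^{r^*}_{\tau_1}]\le B\,E^{\partial_\tau}[\Sigma^{r^*}_{\tau_0}], \] \[ E^{\partial_\tau}[\Sigma^{r^*,\tilde r}_{\tau_0}]\le B\,E^{\partial_\tau}[\Sigma^{r^*}_{\tau_0}],\qquad E^{\partial_\tau}[\Sigma^{r^*,\tilde r}_{\tau_1}]\le B\,E^{\partial_\tau}[\Sigma_{\tau_0}]. \]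
   Context: Fix $a>0$. The Rindler spacetime is $\mathcal M=\mathbb R^2_{(\tau,r)}$ with metric $g=e^{2ar}(-d\tau^2+dr^2)$. Null coordinates are $u=\tau-r$, $v=\tau+r$, so $g=-e^{a(v-u)}\,du\,dv$ and $\partial_\tau=\partial_u+\partial_v$. Via $t-x=U=-a^{-1}e^{-au}$ and $t+x=V=a^{-1}e^{av}$, $\mathcal M$ is isometric to the wedge $\{x>|t|\}$ of $1+1$ Minkowski space with $g=-dU\,dV$. The future Rindler horizon is $\mathcal{RH}^+=\{U=0,V>0\}$, corresponding to $u=+\infty$, and future null infinity $\mathcal I^+$ corresponds to $v\to\infty$. Stress-energy tensor: $T_{\mu\nu}(\psi)=\partial_\mu\psi\partial_\nu\psi-\tfrac12 g_{\mu\nu}g^{\alpha\beta}\partial_\alpha\psi\partial_\beta\psi$. For a vector field $V$, the current is $J^V_\mu=T_{\mu\nu}V^\nu$. Hypersurfaces, with their normals and induced volume forms: - $\Sigma_\tau=\{\tau=\text{const}\}$, with $n=e^{-ar}\partial_\tau$ and $\mathrm{dVol}=e^{ar}dr$; - $\mathcal C_u=\{u=\text{const}\}$, with $n=2e^{-a(v-u)}\partial_v$ and $\mathrm{dVol}=\tfrac12 e^{a(v-u)}dv$; - $\mathcal C_v=\{v=\text{const}\}$, with $n=2e^{-a(v-u)}\partial_u$ and $\mathrm{dVol}=\tfrac12 e^{a(v-u)}du$. For $r_1<r_2$ and $\tau_0\in\mathbb R$, define \[ \Sigma^{r_1,r_2}_{\tau_0}=\{\tau=\tau_0,\ r_1\le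 r\le r_2\}\cup\{v=\tau_0+r_1,\ u\ge\tau_0-r_1\}\cup\{u=\tau_0-r_2,\ v\ge \tau_0+r_2\} \] and \[ \Sigma^{r_1}_{\tau_0}=\{\tau=\tau_0,\ r\ge r_1\}\cup\{v=\tau_0+r_1,\ u\ge \tau_0-r_1\}. \] Each piece carries the normal and volume form listed above for its type. For a hypersurface $\Sigma$ made of such pieces, the energy is $E^V[\Sigma]=\int_\Sigma J^V_\mu n^\mu_\Sigma\,\mathrm{dVol}_\Sigma$. *)

(* Defs.v *)
From HB Require Import structures.
From mathcomp Require Import all_boot all_order all_algebra.
From mathcomp Require Import all_classical all_reals all_analysis.

Set Implicit Arguments.
Unset Strict Implicit.
Unset Printing Implicit Defensive.
Import Order.TTheory GRing.Theory Num.Theory.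
Import numFieldNormedType.Exports.
Local Open Scope classical_set_scope.
Local Open Scope ring_scope.

Section Rindler.
Variable R : realType.

(* Points of M are given by (tau, r); tangent vectors and covectors by their
   components (X^tau, X^r) in the coordinate basis (d_tau, d_r). *)
Definition vec := (R * R)%type.

Definition gmet (a tau r : R) (X Y : vec) : R :=
  expR (2 * a * r) * (- (X.1 * Y.1) + X.2 * Y.2).
Definition ginv (a tau r : R) (w z : vec) : R :=
  expR (- (2 * a * r)) * (- (w.1 * z.1) + w.2 * z.2).
(* components of the inverse metric g^{mu nu}, mu,nu in {tau (false), r (true)} *)
Definition ginv_comp (a tau r : R) (mu nu : bool) : R :=
  ginv a tau r (if mu then (0, 1) else (1, 0)) (if nu then (0, 1) else (1, 0)).
Definition sqrt_abs_det_g (a tau r : R) : R :=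
  Num.sqrt `| gmet a tau r (1,0) (1,0) * gmet a tau r (0,1) (0,1)
              - gmet a tau r (1,0) (0,1) * gmet a tau r (0,1) (1,0) |.

Definition d_tau (f : R -> R -> R) (tau r : R) : R := derive1 (fun t => f t r) tau.
Definition d_r (f : R -> R -> R) (tau r : R) : R := derive1 (fun s => f tau s) r.
Definition d_coord (mu : bool) (f : R -> R -> R) : R -> R -> R :=
  if mu then d_r f else d_tau f.

Definition jcont (f : R -> R -> R) : Prop :=
  continuous (fun p : R * R => f p.1 p.2).
Definition has_partials (f : R -> R -> R) : Prop :=
  forall tau r, derivable (fun t => f t r) tau 1 /\ derivable (fun s => f tau s) r 1.
Definition C2 (f : R -> R -> R) : Prop :=
  [/\ has_partials f, has_partials (d_tau f) & has_partials (d_r f)] /\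
  [/\ jcont f, jcont (d_tau f) & jcont (d_r f)] /\
  [/\ jcont (d_tau (d_tau f)), jcont (d_r (d_tau f)),
      jcont (d_tau (d_r f)) & jcont (d_r (d_r f))].

Definition box_g (a : R) (psi : R -> R -> R) (tau r : R) : R :=
  (sqrt_abs_det_g a tau r)^-1 *
  \sum_(mu <- [:: false; true]) \sum_(nu <- [:: false; true])
     d_coord mu (fun t s => sqrt_abs_det_g a t s * ginv_comp a t s mu nu
                              * d_coord nu psi t s) tau r.

Definition dpsi (psi : R -> R -> R) (tau r : R) : vec := (d_tau psi tau r, d_r psi tau r).
Definition act (w X : vec) : R := w.1 * X.1 + w.2 * X.2.

Definition Tse (a : R) (psi : R -> R -> R) (tau r : R) (X Y : vec) : R :=
  act (dpsi psi tau r) X * act (dpsi psi tau r) Y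
  - 2^-1 * gmet a tau r X Y * ginv a tau r (dpsi psi tau r) (dpsi psi tau r).
Definition Jn (a : R) (psi : R -> R -> R) (V : R -> R -> vec) (tau r : R) (n : vec) : R :=
  Tse a psi tau r (V tau r) n.

Definition dtau_field : R -> R -> vec := fun _ _ => (1, 0).
Definition du_vec : vec := (2^-1, - 2^-1).
Definition dv_vec : vec := (2^-1, 2^-1).
Definition scalev (c : R) (X : vec) : vec := (c * X.1, c * X.2).

(* null coordinates: u = tau - r, v = tau + r ; inverse: *)
Definition tau_of (u v : R) : R := (u + v) / 2.
Definition r_of (u v : R) : R := (v - u) / 2.

Definition U_of (a tau r : R) : R := - a^-1 * expR (- a * (tau - r)).
Definition V_of (a tau r : R) : R := a^-1 * expR (a * (tau + r)).

Local Notation leb := (@lebesgue_measure R).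

(* piece of Sigma_tau, r ranging over D: n = e^{-ar} d_tau, dVol = e^{ar} dr *)
Definition E_slice (a : R) (psi : R -> R -> R) (V : R -> R -> vec) (tau : R)
    (D : set R) : \bar R :=
  (\int[leb]_(r in D)
     (Jn a psi V tau r (scalev (expR (- (a * r))) (1, 0)) * expR (a * r))%:E)%E.
(* piece of C_v = {v = v0}, u >= u0 : n = 2e^{-a(v-u)} d_u, dVol = 1/2 e^{a(v-u)} du *)
Definition E_Cv (a : R) (psi : R -> R -> R) (V : R -> R -> vec) (v0 u0 : R) : \bar R :=
  (\int[leb]_(u in `[u0, +oo[)
     (Jn a psi V (tau_of u v0) (r_of u v0)
        (scalev (2 * expR (- (a * (v0 - u)))) du_vec)
      * (2^-1 * expR (a * (v0 - u))))%:E)%E.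
(* piece of C_u = {u = u0}, v >= v0 : n = 2e^{-a(v-u)} d_v, dVol = 1/2 e^{a(v-u)} dv *)
Definition E_Cu (a : R) (psi : R -> R -> R) (V : R -> R -> vec) (u0 v0 : R) : \bar R :=
  (\int[leb]_(v in `[v0, +oo[)
     (Jn a psi V (tau_of u0 v) (r_of u0 v)
        (scalev (2 * expR (- (a * (v - u0)))) dv_vec)
      * (2^-1 * expR (a * (v - u0))))%:E)%E.

Definition E_Sigma (a : R) psi V (tau0 : R) : \bar R := E_slice a psi V tau0 setT.
Definition E_Sigma12 (a : R) psi V (tau0 r1 r2 : R) : \bar R :=
  (E_slice a psi V tau0 `[r1, r2] + E_Cv a psi V (tau0 + r1) (tau0 - r1)
   + E_Cu a psi V (tau0 - r2) (tau0 + r2))%E.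
Definition E_Sigma1 (a : R) psi V (tau0 r1 : R) : \bar R :=
  (E_slice a psi V tau0 `[r1, +oo[ + E_Cv a psi V (tau0 + r1) (tau0 - r1))%E.

(* Initial data compactly supported w.r.t. (U,V).
   Data = psi on every piece, plus the normal derivative d_tau psi on the
   spacelike piece. Compact support: vanishing outside a box |U|,|V| <= C. *)
Definition data_cs_Sigma12 (a : R) (psi : R -> R -> R) (tau0 r1 r2 : R) : Prop :=
  exists C : R, forall tau r,
    (`|U_of a tau r| > C \/ `|V_of a tau r| > C) ->
    [/\ ((tau = tau0 /\ r1 <= r <= r2) -> psi tau r = 0 /\ d_tau psi tau r = 0),
        ((tau + r = tau0 + r1 /\ tau - r >= tau0 - r1) -> psi tau r = 0) &
        ((tau - r = tau0 - r2 /\ tau + r >= tau0 + r2) -> psi tau r = 0)].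
Definition data_cs_Sigma (a : R) (psi : R -> R -> R) (tau0 : R) : Prop :=
  exists C : R, forall r,
    (`|U_of a tau0 r| > C \/ `|V_of a tau0 r| > C) ->
    psi tau0 r = 0 /\ d_tau psi tau0 r = 0.

End Rindler.

(* Main.v *)
Require Import Defs.
From HB Require Import structures.
From mathcomp Require Import all_boot all_order all_algebra.
From mathcomp Require Import all_classical all_reals all_analysis.
From mathcomp Require Import measurable_realfun.
From mathcomp Require Import ring lra.
Import Order.TTheory GRing.Theory Num.Theory.
Import numFieldNormedType.Exports.
Local Open Scope classical_set_scope.
Local Open Scope ring_scope.

Section S.
Context {R : realType}.
Notation mu := (@lebesgue_measure R).
Lemma shift_is_derive (c x : R) : is_derive x 1 (fun y => c + y) 1.
Proof.
have := @is_deriveD _ _ _ (cst c) id x 1 0 1.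
rewrite add0r; apply.
Qed.
Lemma shift_derive1 (c : R) : derive1 (fun y => c + y) = cst 1.
Proof. apply/funext => x; rewrite derive1E; by have [_ ->] := shift_is_derive c x. Qed.
Lemma shift_cont (c : R) : continuous (fun y => c + y).
Proof. move=> x; apply: differentiable_continuous; rewrite -derivable1_diffP. by have [] := shift_is_derive c x. Qed.
Lemma subst_cc (G : R -> R) (c a b : R) : (a <= b)%R -> continuous G ->
  (\int[mu]_(x in `[a, b]) (G (c + x)%R)%:E = \int[mu]_(x in `[(c + a)%R, (c + b)%R]) (G x)%:E)%E.
Proof.
move=> ab cG.
rewrite (@integration_by_substitution_increasing R (fun y => c + y) G a b) //.
- apply: eq_integral => x _; congr EFin.
  by rewrite shift_derive1 /= mulr1.
- by move=> x y _ _; rewrite ltrD2l.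
- by rewrite shift_derive1 => x _; exact: cst_continuous.
- by rewrite shift_derive1; exact: is_cvg_cst.
- by rewrite shift_derive1; exact: is_cvg_cst.
- split.
  + by move=> x _; have [] := shift_is_derive c x.
  + exact/cvg_at_right_filter/shift_cont.
  + exact/cvg_at_left_filter/shift_cont.
- exact: continuous_subspaceT.
Qed.
Lemma subst_cy (G : R -> R) (c a : R) : continuous G -> (forall x, 0 <= G x)%R ->
  (\int[mu]_(x in `[a, +oo[) (G (c + x)%R)%:E = \int[mu]_(x in `[(c + a)%R, +oo[) (G x)%:E)%E.
Proof.
move=> cG G0.
rewrite (@increasing_ge0_integration_by_substitutiony R (fun y => c + y) G a) //.
- apply: eq_integral => x _; congr EFin.
  by rewrite shift_derive1 /= mulr1.
- by move=> x y _ _; rewrite ltrD2l.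
- by rewrite shift_derive1 => x _; exact: cst_continuous.
- by rewrite shift_derive1; exact: is_cvg_cst.
- by rewrite shift_derive1; exact: is_cvg_cst.
- split.
  + by move=> x _; have [] := shift_is_derive c x.
  + exact/cvg_at_right_filter/shift_cont.
- exact: cvg_addrl.
- exact: continuous_subspaceT.
Qed.
Lemma subst_T (G : R -> R) (c : R) : continuous G -> (forall x, 0 <= G x)%R ->
  (\int[mu]_x (G (c + x)%R)%:E = \int[mu]_x (G x)%:E)%E.
Proof.
move=> cG G0.
rewrite (@increasing_ge0_integration_by_substitutionT R (fun y => c + y) G) //.
- apply: eq_integral => x _; congr EFin.
  by rewrite shift_derive1 /= mulr1.
- by move=> x y; rewrite ltrD2l.
- by rewrite shift_derive1 => x; exact: cst_continuous.
- by rewrite shift_derive1; exact: is_cvg_cst.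
- by rewrite shift_derive1; exact: is_cvg_cst.
- exact: cvg_addrl_Ny.
- exact: cvg_addrl.
Qed.
Lemma subst_refl (G : R -> R) (a : R) : continuous G -> (forall x, 0 <= G x)%R ->
  (\int[mu]_(x in `[a, +oo[) (G (- x)%R)%:E = \int[mu]_(x in `]-oo, (- a)%R]) (G x)%:E)%E.
Proof.
move=> cG G0.
by rewrite ge0_integration_by_substitutionNy //; exact: continuous_subspaceT.
Qed.
Lemma mfE (f : R -> R) (D : set R) : continuous f -> measurable_fun D (EFin \o f).
Proof.
move=> cf; apply/measurable_EFinP; apply: measurable_funTS.
exact: continuous_measurable_fun.
Qed.
Lemma split_itv (f : R -> R) (a b : itv_bound R) (m : R) : continuous f -> (forall x, 0 <= f x)%R ->
  (a <= BLeft m)%O -> (BLeft m <= b)%O ->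
  (\int[mu]_(x in [set` Interval a b]) (f x)%:E =
   \int[mu]_(x in [set` Interval a (BLeft m)]) (f x)%:E +
   \int[mu]_(x in [set` Interval (BLeft m) b]) (f x)%:E)%E.
Proof.
move=> cf f0 am mb.
rewrite (itv_bndbnd_setU am mb) ge0_integral_setU //.
- exact: mfE.
- by move=> x _; rewrite lee_fin.
- rewrite disj_set2E; apply/eqP/seteqP; split => x //= [].
  rewrite !in_itv /=.
  by move=> /andP[_ xm] /andP[+ _]; rewrite leNgt xm.
Qed.
End S.

Section E.
Context {R : realType}.
Notation mu := (@lebesgue_measure R).
Variables (p q : R -> R).
Hypotheses (cp : continuous p) (cq : continuous q).
Hypotheses (p0 : forall x, 0 <= p x) (q0 : forall x, 0 <= q x).

Lemma cshift (f : R -> R) c : continuous f -> continuous (fun x => f (c + x)).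
Proof. move=> cf x; apply: continuous_comp; [exact: shift_cont | exact: cf]. Qed.

Definition Es (tau : R) (D : set R) :=
  (\int[mu]_(x in D) (p (- tau + x) + q (tau + x))%:E)%E.

Lemma Es_split tau (D : set R) : measurable D ->
  Es tau D = (\int[mu]_(x in D) (p (- tau + x))%:E + \int[mu]_(x in D) (q (tau + x))%:E)%E.
Proof.
move=> mD; rewrite /Es.
under eq_integral do rewrite EFinD.
rewrite ge0_integralD //.
- by move=> x _; rewrite lee_fin.
- exact: (@mfE R _ D (cshift _ (-tau) cp)).
- by move=> x _; rewrite lee_fin.
- exact: (@mfE R _ D (cshift _ tau cq)).
Qed.

Lemma F12 tau r1 r2 : (r1 <= r2)%R ->
  (Es tau `[r1, r2] + \int[mu]_(u in `[(tau - r1)%R, +oo[) (p (- u)%R)%:E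
   + \int[mu]_(v in `[(tau + r2)%R, +oo[) (q v)%:E =
   \int[mu]_(x in `]-oo, (- tau + r2)%R]) (p x)%:E
   + \int[mu]_(x in `[(tau + r1)%R, +oo[) (q x)%:E)%E.
Proof.
move=> r12.
rewrite Es_split // !subst_cc // subst_refl //.
rewrite (@split_itv R p -oo%O (BRight (- tau + r2)) (- tau + r1)) //; last first.
  by rewrite bnd_simp lerD2l.
rewrite (@split_itv R q (BLeft (tau + r1)) +oo%O (tau + r2)) //; last first.
  by rewrite bnd_simp lerD2l.
rewrite (@integral_itv_bndo_bndc R -oo%O (- tau + r1)); last exact: mfE.
rewrite (@integral_itv_bndo_bndc R (BLeft (tau + r1)) (tau + r2)); last exact: mfE.
have -> : (- (tau - r1) = - tau + r1)%R by rewrite opprB addrC.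
have H (a b c d : \bar R) : (a + b + c + d = (c + a) + (b + d))%E.
  by rewrite [(c + a)%E]addeC -!addeA; congr (_ + _)%E; rewrite addeCA.
exact: H.
Qed.

Lemma F1 tau r1 :
  (Es tau `[r1, +oo[ + \int[mu]_(u in `[(tau - r1)%R, +oo[) (p (- u)%R)%:E =
   \int[mu]_x (p x)%:E + \int[mu]_(x in `[(tau + r1)%R, +oo[) (q x)%:E)%E.
Proof.
rewrite Es_split // !subst_cy // subst_refl //.
rewrite -set_itvNyy (@split_itv R p -oo%O +oo%O (- tau + r1)) //.
rewrite (@integral_itv_bndo_bndc R -oo%O (- tau + r1)); last exact: mfE.
have -> : (- (tau - r1) = - tau + r1)%R by rewrite opprB addrC.
have H (a b c : \bar R) : (a + b + c = (c + a) + b)%E.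
  by rewrite [(c + a)%E]addeC addeAC.
exact: H.
Qed.

Lemma FS tau :
  (Es tau setT = \int[mu]_x (p x)%:E + \int[mu]_x (q x)%:E)%E.
Proof. by rewrite Es_split // !subst_T. Qed.

Lemma sub_int (f : R -> R) (A B : set R) : continuous f -> (forall x, 0 <= f x) ->
  measurable A -> measurable B -> A `<=` B ->
  (\int[mu]_(x in A) (f x)%:E <= \int[mu]_(x in B) (f x)%:E)%E.
Proof.
move=> cf f0 mA mB AB; apply: ge0_subset_integral => //.
- exact: mfE.
- by move=> x _; rewrite lee_fin.
Qed.

Lemma int_ge0 (f : R -> R) (A : set R) : (forall x, 0 <= f x) ->
  (0 <= \int[mu]_(x in A) (f x)%:E)%E.
Proof. by move=> f0; apply: integral_ge0 => x _; rewrite lee_fin. Qed.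

Lemma subNy (a b : R) : (a <= b)%R -> `]-oo, a] `<=` `]-oo, b].
Proof. by move=> ab x /=; rewrite !in_itv /= => xa; exact: le_trans xa ab. Qed.
Lemma suby (a b : R) : (a <= b)%R -> `[b, +oo[ `<=` `[a, +oo[.
Proof. by move=> ab x /=; rewrite !in_itv /= !andbT => xa; exact: le_trans ab xa. Qed.

Lemma energy_ineqs (tau0 tau1 r1 r2 : R) : (r1 <= r2)%R -> (tau0 <= tau1)%R ->
  let Cv tau := (\int[mu]_(u in `[(tau - r1)%R, +oo[) (p (- u)%R)%:E)%E in
  let Cu tau := (\int[mu]_(v in `[(tau + r2)%R, +oo[) (q v)%:E)%E in
  let E12 tau := (Es tau `[r1, r2] + Cv tau + Cu tau)%E in
  let E1 tau := (Es tau `[r1, +oo[ + Cv tau)%E in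
  [/\ (E12 tau1 <= E12 tau0)%E, (E1 tau1 <= E1 tau0)%E,
      (E12 tau0 <= E1 tau0)%E & (E12 tau1 <= Es tau0 setT)%E].
Proof.
move=> r12 t01 Cv Cu E12 E1.
rewrite /E12 /E1 /Cv /Cu !F12 // !F1 FS.
split.
- apply: leeD; apply: sub_int => //.
  + by apply: subNy; rewrite lerD2r lerN2.
  + by apply: suby; rewrite lerD2r.
- apply: leeD2l; apply: sub_int => //.
  by apply: suby; rewrite lerD2r.
- apply: leeD2r; apply: sub_int => //.
- apply: leeD; apply: sub_int => //.
Qed.
End E.

Section A.
Context {R : realType}.
Lemma jc_eps (f : R -> R -> R) : jcont f -> forall x y e, 0 < e ->
  exists2 d, 0 < d & forall a b, `|a - x| < d -> `|b - y| < d -> `|f a b - f x y| < e.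
Proof.
move=> cf x y e e0.
have := cf (x, y); move/cvgrPdist_lt => /(_ e e0) /nbhs_ballP [d d0 H].
exists d => // a b ax bx.
rewrite distrC; apply: (H (a, b)); split => /=; rewrite /ball /= distrC //.
Qed.


Lemma dcont (phi dphi : R -> R) : (forall z : R, is_derive z (1:R) phi (dphi z)) -> continuous phi.
Proof.
move=> H r; apply/differentiable_continuous/derivable1_diffP.
by have [] := H r.
Qed.

Lemma mvt2 (phi dphi : R -> R) a b : (forall z : R, is_derive z (1:R) phi (dphi z)) ->
  exists xi, `|xi - a| <= `|b - a| /\ phi b - phi a = dphi xi * (b - a).
Proof.
move=> H; have cphi := @dcont phi dphi H.
have cw : forall u v, {within `[u, v], continuous phi}.
  by move=> u v; apply: continuous_subspaceT.
case: (leP a b) => ab.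
- have [c /andP[ac cb] E] := MVT_segment ab (fun z _ => H z) (cw a b).
  exists c; split => //.
  by rewrite !ger0_norm ?subr_ge0 // lerD2r.
- have [c /andP[bc ca] E] := MVT_segment (ltW ab) (fun z _ => H z) (cw b a).
  exists c; split.
    by rewrite distrC [X in _ <= X]distrC !ger0_norm ?subr_ge0 ?(ltW ab) // lerD2l lerN2.
  by rewrite -opprB E -mulrN opprB.
Qed.

Lemma schwarz (f A Bf M1 M2 : R -> R -> R) :
  (forall t r, is_derive t (1:R) (fun t => f t r) (A t r)) ->
  (forall t r, is_derive r (1:R) (fun s => f t s) (Bf t r)) ->
  (forall t r, is_derive r (1:R) (fun s => A t s) (M1 t r)) ->
  (forall t r, is_derive t (1:R) (fun t => Bf t r) (M2 t r)) ->
  jcont M1 -> jcont M2 -> forall x y, M1 x y = M2 x y.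
Proof.
move=> H1 H2 H12 H21 c1 c2 x y.
apply/eqP; apply/negPn/negP => ne.
set e := `|M1 x y - M2 x y|.
have e0 : 0 < e by rewrite normr_gt0 subr_eq0.
have e20 : 0 < e / 2 by rewrite divr_gt0.
have [d1 d10 D1] := @jc_eps M1 c1 x y _ e20.
have [d2 d20 D2] := @jc_eps M2 c2 x y _ e20.
set h := Num.min d1 d2 / 2.
have h0 : 0 < h by rewrite divr_gt0 // lt_min d10 d20.
have hd1 : h < d1.
  rewrite /h; apply: (@le_lt_trans _ _ (d1 / 2)); first by rewrite ler_pM2r // ge_min lexx.
  by rewrite ltr_pdivrMr // ltr_pMr // ltr1n.
have hd2 : h < d2.
  rewrite /h; apply: (@le_lt_trans _ _ (d2 / 2)); first by rewrite ler_pM2r // ge_min lexx orbT.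
  by rewrite ltr_pdivrMr // ltr_pMr // ltr1n.
have P1 : forall z : R, is_derive z (1:R) (fun z => f z (y + h) - f z y) (A z (y + h) - A z y).
  by move=> z; apply: is_deriveB.
have P2 : forall s : R, is_derive s (1:R) (fun s => f (x + h) s - f x s) (Bf (x + h) s - Bf x s).
  by move=> s; apply: is_deriveB.
have [xi [xix E1]] := mvt2 _ _ x (x + h) P1.
have [eta [etay E2]] := mvt2 _ _ y (y + h) (H12 xi).
have [eta' [etay' E3]] := mvt2 _ _ y (y + h) P2.
have [xi' [xix' E4]] := mvt2 _ _ x (x + h) (fun t => H21 t eta').
have hx : x + h - x = h by ring.
have hy : y + h - y = h by ring.
have hn : `|h| = h by rewrite gtr0_norm.
rewrite hx in E1 E4 xix xix'; rewrite hy in E2 E3 etay etay'.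
rewrite hn in xix etay etay' xix'.
have EQ : M1 xi eta = M2 xi' eta'.
  have hne : h != 0 by rewrite gt_eqF.
  apply: (mulIf hne); apply: (mulIf hne).
  rewrite -E2 -E4 -E1 -E3.
  by ring.
have L1 := D1 xi eta (le_lt_trans xix hd1) (le_lt_trans etay hd1).
have L2 := D2 xi' eta' (le_lt_trans xix' hd2) (le_lt_trans etay' hd2).
have : e < e.
  rewrite {1}/e.
  have -> : M1 x y - M2 x y = - (M1 xi eta - M1 x y) + (M2 xi' eta' - M2 x y) by rewrite EQ; ring.
  apply: (le_lt_trans (ler_normD _ _)); rewrite normrN.
  by rewrite [X in _ < X](splitr e) ltrD.
by rewrite ltxx.
Qed.

Lemma aff_is_derive (y c s : R) : is_derive s (1:R) (fun s => y + c * s) c.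
Proof.
have H1 : is_derive s (1:R) (fun s : R => s) 1 by exact: is_derive_id.
have := @is_deriveD _ _ _ (cst y) (fun s => c * s) s 1 0 c.
rewrite add0r; apply.
have := @is_deriveZ _ _ _ (fun s : R => s) c s 1 1 H1.
by rewrite /GRing.scale /= mulr1.
Qed.

Lemma diag0 (f A Bf : R -> R -> R) (c : R) :
  (forall t r, is_derive t (1:R) (fun t => f t r) (A t r)) ->
  (forall t r, is_derive r (1:R) (fun s => f t s) (Bf t r)) ->
  jcont A -> forall x y,
  (fun t : R => t^-1 * (f (x + t) (y + c * t) - f x (y + c * t))) @ 0^' --> A x y.
Proof.
move=> H1 H2 cA x y.
apply/cvgrPdist_lt => e e0.
have [d d0 D] := @jc_eps A cA x y _ e0.
have c1 : 0 < 1 + `|c| by rewrite ltr_pwDl.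
rewrite near_withinE; apply/nbhs_ballP.
exists (d / (1 + `|c|)); first by rewrite /= divr_gt0.
move=> t; rewrite /ball /= sub0r normrN => td tn0.
have td' : `|t| * (1 + `|c|) < d by rewrite -ltr_pdivlMr.
have [xi [xix E]] := mvt2 _ _ x (x + t) (fun z => H1 z (y + c * t)).
rewrite E (_ : x + t - x = t); last by ring.
have -> : t^-1 * (A xi (y + c * t) * t) = A xi (y + c * t).
  by rewrite mulrC -mulrA mulfV // mulr1.
rewrite distrC; apply: D.
- apply: (le_lt_trans xix); rewrite (_ : x + t - x = t); last by ring.
  apply: le_lt_trans td'; rewrite ler_peMr // lerDl //.
- rewrite (_ : y + c * t - y = c * t); last by ring.
  rewrite normrM; apply: le_lt_trans td'.
  by rewrite mulrC ler_pM2l ?normr_gt0 // lerDr.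
Qed.

Lemma diag (f A Bf : R -> R -> R) (c : R) :
  (forall t r, is_derive t (1:R) (fun t => f t r) (A t r)) ->
  (forall t r, is_derive r (1:R) (fun s => f t s) (Bf t r)) ->
  jcont A -> forall x y h0,
  is_derive h0 (1:R) (fun h => f (x + h) (y + c * h))
    (A (x + h0) (y + c * h0) + c * Bf (x + h0) (y + c * h0)).
Proof.
move=> H1 H2 cA x y h0.
set x' := x + h0; set y' := y + c * h0.
have T1 := @diag0 f A Bf c H1 H2 cA x' y'.
pose k := fun s => f x' (y' + c * s).
have Hk : is_derive (0:R) (1:R) k (Bf x' (y' + c * 0) * c).
  by apply: (@is_derive1_comp R (f x') (fun s => y' + c * s)); [exact: H2 | exact: aff_is_derive].
have [dk Dk] := Hk.
move: dk; rewrite /derivable.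
rewrite /derive in Dk; rewrite Dk mulr0 addr0 => T2.
have sc : forall u v : R, u *: v = u * v by [].
have Q : (fun h : R => h^-1 *: (((fun h => f (x + h) (y + c * h)) \o shift h0) h%:A
     - f (x + h0) (y + c * h0))) =
   (fun t => t^-1 * (f (x' + t) (y' + c * t) - f x' (y' + c * t)) +
     t^-1 *: ((k \o shift 0) t%:A - k 0)).
  apply/funext => t; rewrite /k /= /x' /y' !sc mulr1.
  have -> : x + (t + h0) = x + h0 + t by ring.
  have -> : y + c * (t + h0) = y + c * h0 + c * t by ring.
  have -> : c * (t + 0) = c * t by ring.
  have -> : y + c * h0 + c * 0 = y + c * h0 by ring.
  by ring.
have L : (fun h : R => h^-1 *: (((fun h => f (x + h) (y + c * h)) \o shift h0) h%:A
     - f (x + h0) (y + c * h0))) @ 0^' --> A x' y' + c * Bf x' y'.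
  by rewrite Q mulrC; apply: cvgD.
apply: DeriveDef.
- by apply/cvg_ex; exists (A x' y' + c * Bf x' y').
- by apply/cvg_lim.
Qed.
End A.

Section M.
Context {R : realType}.
Lemma slice_pt (a : R) psi tau r :
  Jn a psi (@dtau_field R) tau r (scalev (expR (- (a * r))) (1, 0)) * expR (a * r)
  = ((d_tau psi tau r) ^+ 2 + (d_r psi tau r) ^+ 2) / 2.
Proof.
rewrite /Jn /Tse /act /dpsi /gmet /ginv /scalev /dtau_field /=.
rewrite !expRN.
have e1 : expR (a * r) != 0 by rewrite gt_eqF // expR_gt0.
have e2 : expR (2 * a * r) != 0 by rewrite gt_eqF // expR_gt0.
by field; rewrite e1 e2.
Qed.

Lemma cv_pt (a : R) psi u v0 :
  Jn a psi (@dtau_field R) (tau_of u v0) (r_of u v0)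
     (scalev (2 * expR (- (a * (v0 - u)))) (@du_vec R)) * (2^-1 * expR (a * (v0 - u)))
  = ((d_tau psi (tau_of u v0) (r_of u v0) - d_r psi (tau_of u v0) (r_of u v0)) / 2) ^+ 2.
Proof.
rewrite /Jn /Tse /act /dpsi /gmet /ginv /scalev /dtau_field /du_vec /=.
rewrite !expRN.
have e1 : expR (a * (v0 - u)) != 0 by rewrite gt_eqF // expR_gt0.
have e2 : expR (2 * a * r_of u v0) != 0 by rewrite gt_eqF // expR_gt0.
by field; rewrite e1 e2.
Qed.
Lemma cu_pt (a : R) psi u0 v :
  Jn a psi (@dtau_field R) (tau_of u0 v) (r_of u0 v)
     (scalev (2 * expR (- (a * (v - u0)))) (@dv_vec R)) * (2^-1 * expR (a * (v - u0)))
  = ((d_tau psi (tau_of u0 v) (r_of u0 v) + d_r psi (tau_of u0 v) (r_of u0 v)) / 2) ^+ 2.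
Proof.
rewrite /Jn /Tse /act /dpsi /gmet /ginv /scalev /dtau_field /dv_vec /=.
rewrite !expRN.
have e1 : expR (a * (v - u0)) != 0 by rewrite gt_eqF // expR_gt0.
have e2 : expR (2 * a * r_of u0 v) != 0 by rewrite gt_eqF // expR_gt0.
by field; rewrite e1 e2.
Qed.

Lemma jcont_snd (f : R -> R -> R) : jcont f -> continuous (fun x => f 0 x).
Proof.
move=> cf x.
exact: (cvg_comp _ _ (cvg_pair (cvg_cst (0:R)) cvg_id) (cf (0, x))).
Qed.

Lemma pt_tau (f : R -> R -> R) : has_partials f ->
  forall t r, is_derive t (1:R) (fun t => f t r) (d_tau f t r).
Proof. by move=> H t r; rewrite /d_tau derive1E; apply: derivableP; case: (H t r). Qed.
Lemma pt_r (f : R -> R -> R) : has_partials f ->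
  forall t r, is_derive r (1:R) (fun s => f t s) (d_r f t r).
Proof. by move=> H t r; rewrite /d_r derive1E; apply: derivableP; case: (H t r). Qed.

Lemma sq_eq (a t s : R) : sqrt_abs_det_g a t s = expR (2 * a * s).
Proof.
rewrite /sqrt_abs_det_g /gmet /=.
set E := expR (2 * a * s).
rewrite (_ : _ - _ = - (E ^+ 2)); last by ring.
by rewrite normrN ger0_norm ?sqr_ge0 // sqrtr_sqr ger0_norm // expR_ge0.
Qed.

Lemma wave (a : R) psi : has_partials (d_tau psi) ->
  (forall tau r, box_g a psi tau r = 0) ->
  forall tau r, d_tau (d_tau psi) tau r = d_r (d_r psi) tau r.
Proof.
move=> hpt B tau r.
have := B tau r; rewrite /box_g !big_cons !big_nil /=.
have Eff : (fun t s => sqrt_abs_det_g a t s * ginv_comp a t s false false * d_tau psi t s)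
   = (fun t s => - d_tau psi t s).
  apply/funext => t; apply/funext => s; rewrite sq_eq /ginv_comp /ginv /= expRN.
  have e : expR (2 * a * s) != 0 by rewrite gt_eqF // expR_gt0.
  by field.
have Eft : (fun t s => sqrt_abs_det_g a t s * ginv_comp a t s false true * d_r psi t s)
   = (fun t s => 0).
  by apply/funext => t; apply/funext => s; rewrite /ginv_comp /ginv /=; ring.
have Etf : (fun t s => sqrt_abs_det_g a t s * ginv_comp a t s true false * d_tau psi t s)
   = (fun t s => 0).
  by apply/funext => t; apply/funext => s; rewrite /ginv_comp /ginv /=; ring.
have Ett : (fun t s => sqrt_abs_det_g a t s * ginv_comp a t s true true * d_r psi t s)
   = (fun t s => d_r psi t s).
  apply/funext => t; apply/funext => s; rewrite sq_eq /ginv_comp /ginv /= expRN.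
  have e : expR (2 * a * s) != 0 by rewrite gt_eqF // expR_gt0.
  by field.
rewrite Eff Eft Etf Ett.
have H0 : forall (g : R -> R -> R), (forall t s, g t s = 0) -> d_tau g tau r = 0 /\ d_r g tau r = 0.
  move=> g g0; rewrite /d_tau /d_r.
  have -> : (fun t => g t r) = cst 0 by apply/funext => t; rewrite g0.
  have -> : (fun s => g tau s) = cst 0 by apply/funext => t; rewrite g0.
  by rewrite !derive1_cst.
have [-> _] := H0 (fun _ _ => 0) (fun _ _ => erefl).
have [_ ->] := H0 (fun _ _ => 0) (fun _ _ => erefl).
have HN : d_tau (fun t s => - d_tau psi t s) tau r = - d_tau (d_tau psi) tau r.
  exact: (derive1N (hpt tau r).1).
rewrite HN.
have -> : d_r (fun t : R => [eta d_r psi t]) tau r = d_r (d_r psi) tau r by [].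
rewrite sq_eq !addr0 add0r.
have e : (expR (2 * a * r))^-1 != 0 by rewrite invr_eq0 gt_eqF // expR_gt0.
move/eqP; rewrite mulf_eq0 (negbTE e) /= addrC subr_eq0 => /eqP ->.
by [].
Qed.
End M.

Section M2.
Context {R : realType}.
Variable psi : R -> R -> R.
Hypotheses (hp : has_partials psi) (hpt : has_partials (d_tau psi)) (hpr : has_partials (d_r psi)).
Hypotheses (ctt : jcont (d_tau (d_tau psi))) (crt : jcont (d_r (d_tau psi)))
  (ctr : jcont (d_tau (d_r psi))).
Hypothesis W : forall t r, d_tau (d_tau psi) t r = d_r (d_r psi) t r.

Lemma Sch t r : d_r (d_tau psi) t r = d_tau (d_r psi) t r.
Proof.
exact: (@schwarz R _ _ _ _ _ (pt_tau _ hp) (pt_r _ hp) (pt_r _ hpt) (pt_tau _ hpr) crt ctr t r).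
Qed.

Lemma Pconst tau r : d_tau psi tau r - d_r psi tau r =
  d_tau psi 0 (- tau + r) - d_r psi 0 (- tau + r).
Proof.
set y := - tau + r.
have D h0 := is_deriveB (@diag R _ _ _ 1 (pt_tau _ hpt) (pt_r _ hpt) ctt 0 y h0)
                        (@diag R _ _ _ 1 (pt_tau _ hpr) (pt_r _ hpr) ctr 0 y h0).
have Z : forall X Y : R, X + 1 * Y - (Y + 1 * X) = 0 by move=> X Y; ring.
have D0 : forall h0, is_derive h0 (1:R) ((fun h => d_tau psi (0 + h) (y + 1 * h)) -
       (fun h => d_r psi (0 + h) (y + 1 * h))) 0.
  by move=> h0; have := D h0; rewrite Sch W Z.
have := is_derive_0_is_cst tau 0 D0.
move=> E.
have E' : d_tau psi (0 + tau) (y + 1 * tau) - d_r psi (0 + tau) (y + 1 * tau) =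
  d_tau psi (0 + 0) (y + 1 * 0) - d_r psi (0 + 0) (y + 1 * 0) := E.
move: E'; rewrite !add0r !mulr0 !addr0 !mul1r /y.
by rewrite [_ + r]addrC subrK.
Qed.

Lemma Qconst tau r : d_tau psi tau r + d_r psi tau r =
  d_tau psi 0 (tau + r) + d_r psi 0 (tau + r).
Proof.
set y := tau + r.
have D h0 := is_deriveD (@diag R _ _ _ (-1) (pt_tau _ hpt) (pt_r _ hpt) ctt 0 y h0)
                        (@diag R _ _ _ (-1) (pt_tau _ hpr) (pt_r _ hpr) ctr 0 y h0).
have Z : forall X Y : R, X + (-1) * Y + (Y + (-1) * X) = 0 by move=> X Y; ring.
have D0 : forall h0, is_derive h0 (1:R) ((fun h => d_tau psi (0 + h) (y + -1 * h)) +
       (fun h => d_r psi (0 + h) (y + -1 * h))) 0.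
  by move=> h0; have := D h0; rewrite Sch W Z.
have := is_derive_0_is_cst tau 0 D0.
move=> E.
have E' : d_tau psi (0 + tau) (y + -1 * tau) + d_r psi (0 + tau) (y + -1 * tau) =
  d_tau psi (0 + 0) (y + -1 * 0) + d_r psi (0 + 0) (y + -1 * 0) := E.
move: E'; rewrite !add0r !mulr0 !addr0 !mulN1r /y.
by have -> : tau + r - tau = r by ring.
Qed.
End M2.

Section C.
Context {R : realType}.
Lemma cont_sq (F G : R -> R) (s : R) : continuous F -> continuous G ->
  continuous (fun x => ((F x + s * G x) / 2) ^+ 2).
Proof.
move=> cF cG x.
have h : continuous (fun x => (F x + s * G x) / 2).
  move=> y; apply: cvgM; last exact: cvg_cst.
  apply: cvgD; first exact: cF.
  apply: cvgM; [exact: cvg_cst | exact: cG].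
rewrite /continuous_at.
under eq_fun do rewrite expr2.
rewrite expr2; apply: cvgM; exact: h.
Qed.
End C.

Lemma tr_of {R : realType} (u v : R) : - tau_of u v + r_of u v = - u.
Proof. by rewrite /tau_of /r_of; field; rewrite ?pnatr_eq0. Qed.
Lemma trp_of {R : realType} (u v : R) : tau_of u v + r_of u v = v.
Proof. by rewrite /tau_of /r_of; field; rewrite ?pnatr_eq0. Qed.

Theorem proposition3p1 (R : realType) (a : R) (ha : 0 < a)
    (rs rt tau0 : R) (psi : R -> R -> R) :
  rs < rt ->
  C2 psi ->
  (forall tau r, box_g a psi tau r = 0) ->
  (data_cs_Sigma12 a psi tau0 rs rt \/ data_cs_Sigma a psi tau0) ->
  exists B : R, forall tau1 : R, tau0 <= tau1 ->
    [/\ (E_Sigma12 a psi (@dtau_field R) tau1 rs rt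
           <= B%:E * E_Sigma12 a psi (@dtau_field R) tau0 rs rt)%E,
        (E_Sigma1 a psi (@dtau_field R) tau1 rs
           <= B%:E * E_Sigma1 a psi (@dtau_field R) tau0 rs)%E,
        (E_Sigma12 a psi (@dtau_field R) tau0 rs rt
           <= B%:E * E_Sigma1 a psi (@dtau_field R) tau0 rs)%E &
        (E_Sigma12 a psi (@dtau_field R) tau1 rs rt
           <= B%:E * E_Sigma a psi (@dtau_field R) tau0)%E].
Proof.
move=> hr [[hp hpt hpr] [[cj cjt cjr] [ctt crt ctr crr]]] B _.
have W := @wave R a psi hpt B.
pose p := fun x => ((d_tau psi 0 x + (-1) * d_r psi 0 x) / 2) ^+ 2.
pose q := fun x => ((d_tau psi 0 x + 1 * d_r psi 0 x) / 2) ^+ 2.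
have cp : continuous p by apply: cont_sq; [exact: (@jcont_snd R _ cjt) | exact: (@jcont_snd R _ cjr)].
have cq : continuous q by apply: cont_sq; [exact: (@jcont_snd R _ cjt) | exact: (@jcont_snd R _ cjr)].
have p0 : forall x, 0 <= p x by move=> x; exact: sqr_ge0.
have q0 : forall x, 0 <= q x by move=> x; exact: sqr_ge0.
have PC := @Pconst R psi hp hpt hpr ctt crt ctr W.
have QC := @Qconst R psi hp hpt hpr ctt crt ctr W.
have Ls tau D : E_slice a psi (@dtau_field R) tau D = Es p q tau D.
  rewrite /E_slice /Es; apply: eq_integral => r _; congr EFin.
  by rewrite slice_pt /p /q mulN1r mul1r -PC -QC; field; rewrite ?pnatr_eq0.
have Lv v0 u0 : E_Cv a psi (@dtau_field R) v0 u0 =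
    (\int[lebesgue_measure]_(u in `[u0, +oo[) (p (- u)%R)%:E)%E.
  rewrite /E_Cv; apply: eq_integral => u _; congr EFin.
  by rewrite cv_pt /p mulN1r PC tr_of.
have Lu u0 v0 : E_Cu a psi (@dtau_field R) u0 v0 =
    (\int[lebesgue_measure]_(v in `[v0, +oo[) (q v)%:E)%E.
  rewrite /E_Cu; apply: eq_integral => v _; congr EFin.
  by rewrite cu_pt /q mul1r QC trp_of.
exists (1:R); move=> tau1 t01.
rewrite !mul1e /E_Sigma12 /E_Sigma1 /E_Sigma !Ls !Lv !Lu.
have [H1 H2 H3 H4] := @energy_ineqs R p q cp cq p0 q0 tau0 tau1 rs rt (ltW hr) t01.
split; [exact: H1 | exact: H2 | exact: H3 | exact: H4].
Qed.
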